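(* Let $\mathcal{T}:L^2(\mathbb{R})\to L^2(\mathbb{R})$ be a nonzero self-adjoint Hilbert–Schmidt operator, $\mathcal{T} = \sum_{k\in\mathbb{N}}\lambda_k v_kv_k^*$ with $(v_k)$ an orthonormal basis of $L^2(\mathbb{R})$ and real eigenvalues ordered so that $\|\mathcal{T}\| = |\lambda_1|>0$. Suppose $\lambda_1>0$ and that for some $0<\gamma\le1$, $\lambda_1 - |\lambda_k|\ge\gamma\lambda_1$ for all $k>1$. Given $u_0\in L^2(\mathbb{R})$, define $u_{k+1} = \mathcal{T}u_k/\|\mathcal{T}u_k\|_{L^2(\mathbb{R})}$. If $|\langle v_1,u_0\rangle_{L^2}|\ge\eta>0$, then for every $k\ge1$, $$\big\|u_k - \mathrm{sign}(\langle v_1,u_0\rangle)v_1\big\|_{L^2}^2\le 2(1-\gamma)^{2k}\frac{\|u_0\|_{L^2}^2}{\eta^2}.$$ Moreover, if in addition $k\ge \frac{\log(\eta/4\|u_0\|_{L^2})}{\log(1-\gamma)}$, then $$\Big\|\sqrt{\langle u_k,\mathcal{T}u_k\rangle}\,u_k - \sqrt{\lambda_1}\,\mathrm{sign}(\langle v_1,u_0\rangle)v_1\Big\|_{L^2}^2\le 18\lambda_1(1-\gamma)^{2k}\frac{\|u_0\|_{L^2}^2}{\eta^2}.$$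
   Context: $v_kv_k^*$ denotes the rank-one operator $h\mapsto v_k\langle v_k,h\rangle$. *)

(* Defs.v *)
From HB Require Import structures.
From mathcomp Require Import all_boot all_order all_algebra.
From mathcomp Require Import all_classical all_reals all_analysis.
Set Implicit Arguments. Unset Strict Implicit. Unset Printing Implicit Defensive.
Import Order.TTheory GRing.Theory Num.Theory numFieldNormedType.Exports.
Local Open Scope classical_set_scope.
Local Open Scope ring_scope.

(* Real L^2(R) w.r.t. Lebesgue measure, represented by (a.e.-classes of)
   functions R -> R. *)
Section L2.
Variable R : realType.

Definition leb := @lebesgue_measure R.

Definition L2 (f : R -> R) : Prop :=
  measurable_fun setT f /\ leb.-integrable setT (fun x => ((f x) ^+ 2)%:E).

Definition ip (f g : R -> R) : R := Rintegral leb setT (fun x => f x * g x).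

Definition nrm (f : R -> R) : R := Num.sqrt (ip f f).

Definition fsub (f g : R -> R) : R -> R := fun x => f x - g x.
Definition fscale (a : R) (f : R -> R) : R -> R := fun x => a * f x.
Definition fsum (n : nat) (F : nat -> R -> R) : R -> R :=
  fun x => \sum_(i < n) F i x.

Definition ONB (v : nat -> R -> R) : Prop :=
  (forall k, L2 (v k)) /\
  (forall i j, ip (v i) (v j) = (if i == j then 1 else 0)) /\
  (forall f, L2 f ->
     (fun n : nat => nrm (fsub f (fsum n (fun k => fscale (ip (v k) f) (v k)))))
       @ \oo --> (0 : R)).

Definition spectral_decomp (T : (R -> R) -> (R -> R)) (lam : nat -> R)
  (v : nat -> R -> R) : Prop :=
  forall f, L2 f -> L2 (T f) /\
    (fun n : nat =>
       nrm (fsub (T f) (fsum n (fun k => fscale (lam k * ip (v k) f) (v k)))))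
      @ \oo --> (0 : R).

Definition HS_eigs (lam : nat -> R) : Prop :=
  exists M : R, forall n, \sum_(k < n) lam k ^+ 2 <= M.

Fixpoint power_iter (T : (R -> R) -> (R -> R)) (u0 : R -> R) (n : nat)
  : R -> R :=
  match n with
  | 0 => u0
  | n'.+1 => let w := T (power_iter T u0 n') in fun x => w x / nrm w
  end.

End L2.

(* Main.v *)
Require Import Defs.
From HB Require Import structures.
From mathcomp Require Import all_boot all_order all_algebra.
From mathcomp Require Import all_classical all_reals all_analysis.
From mathcomp Require Import ring lra.
Set Implicit Arguments. Unset Strict Implicit. Unset Printing Implicit Defensive.
Import Order.TTheory GRing.Theory Num.Theory numFieldNormedType.Exports.
Local Open Scope classical_set_scope.
Local Open Scope ring_scope.
Import measurable_realfun.
Section S.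
Variable R : realType.
Implicit Types f g h : R -> R.

Definition Int f := (@leb R).-integrable setT (EFin \o f).

Lemma L2_meas f : L2 f -> measurable_fun setT f.
Proof. by case. Qed.

Lemma L2_sq f : L2 f -> Int (fun x => f x ^+ 2).
Proof. by case. Qed.

Lemma Int_meas f : Int f -> measurable_fun setT f.
Proof. by move=> /integrableP[/measurable_EFinP]. Qed.

Lemma Int_le f g : measurable_fun setT f -> (forall x, `|f x| <= `|g x|) -> Int g -> Int f.
Proof.
move=> mf fg ig; apply: (le_integrable measurableT _ _ ig) => //.
  exact/measurable_EFinP.
by move=> x _; rewrite /= lee_fin.
Qed.

Lemma IntD f g : Int f -> Int g -> Int (fun x => f x + g x).
Proof. by move=> i1 i2; have := integrableD measurableT i1 i2. Qed.

Lemma IntB f g : Int f -> Int g -> Int (fun x => f x - g x).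
Proof. by move=> i1 i2; have := integrableB measurableT i1 i2. Qed.

Lemma IntZ a f : Int f -> Int (fun x => a * f x).
Proof. by move=> i1; have := integrableZl measurableT a i1. Qed.

Lemma L2_mul f g : L2 f -> L2 g -> Int (fun x => f x * g x).
Proof.
move=> Lf Lg; apply: (@Int_le _ (fun x => f x ^+ 2 + g x ^+ 2)).
- by apply: measurable_funM; apply: L2_meas.
- move=> x; rewrite (ger0_norm (x := _ + _)); last by rewrite addr_ge0 // sqr_ge0.
  set a := f x; set b := g x.
  rewrite ler_norml; have := sqr_ge0 (a - b); have := sqr_ge0 (a + b).
  move=> h1 h2; apply/andP; split; nra.
- by apply: IntD; apply: L2_sq.
Qed.

Lemma L2D f g : L2 f -> L2 g -> L2 (fun x => f x + g x).
Proof.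
move=> Lf Lg; split; first by apply: measurable_funD; apply: L2_meas.
apply: (@Int_le _ (fun x => 2 * (f x ^+ 2 + g x ^+ 2))).
- by apply: measurable_funX; apply: measurable_funD; apply: L2_meas.
- move=> x; rewrite !ger0_norm ?sqr_ge0 //; last first.
    by rewrite mulr_ge0 // addr_ge0 // sqr_ge0.
  have := sqr_ge0 (f x - g x); nra.
- by apply: IntZ; apply: IntD; apply: L2_sq.
Qed.

Lemma L2Z a f : L2 f -> L2 (fscale a f).
Proof.
move=> Lf; split; first by apply: measurable_funM => //; apply: L2_meas.
have := IntZ (a ^+ 2) (L2_sq Lf). rewrite /Int /comp.
apply: eq_integrable => //.
by move=> x _; rewrite /fscale /= exprMn.
Qed.


Lemma L2N f : L2 f -> L2 (fun x => - f x).
Proof.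
move=> /(L2Z (-1)); congr L2; apply: funext => x; by rewrite /fscale mulN1r.
Qed.

Lemma L2B f g : L2 f -> L2 g -> L2 (fsub f g).
Proof. by move=> Lf Lg; apply: (L2D Lf (L2N Lg)). Qed.

Lemma fsumS n (F : nat -> R -> R) : fsum n.+1 F = (fun x => fsum n F x + F n x).
Proof. by apply: funext => x; rewrite /fsum big_ord_recr. Qed.

Lemma fsum0 (F : nat -> R -> R) : fsum 0 F = (fun x => 0).
Proof. by apply: funext => x; rewrite /fsum big_ord0. Qed.

Lemma L20 : L2 (fun x : R => 0).
Proof.
split; first exact: measurable_cst.
apply: (eq_integrable measurableT (fun x => 0%E)); last exact: integrable0.
by move=> x _; rewrite expr0n.
Qed.

Lemma L2sum n (F : nat -> R -> R) : (forall i, L2 (F i)) -> L2 (fsum n F).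
Proof.
move=> LF; elim: n => [|n IH]; first by rewrite fsum0; exact: L20.
by rewrite fsumS; apply: L2D.
Qed.

Lemma ipC f g : ip f g = ip g f.
Proof. by rewrite /ip; congr Rintegral; apply: funext => x; rewrite mulrC. Qed.

Lemma ipDl f g h : L2 f -> L2 g -> L2 h ->
  ip (fun x => f x + g x) h = ip f h + ip g h.
Proof.
move=> Lf Lg Lh; rewrite /ip -RintegralD //; last 2 first.
- exact: L2_mul.
- exact: L2_mul.
by congr Rintegral; apply: funext => x; rewrite mulrDl.
Qed.

Lemma ipZl a f h : L2 f -> L2 h -> ip (fscale a f) h = a * ip f h.
Proof.
move=> Lf Lh; rewrite /ip -RintegralZl //; last exact: L2_mul.
by congr Rintegral; apply: funext => x; rewrite /fscale mulrA.
Qed.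

Lemma ipBl f g h : L2 f -> L2 g -> L2 h -> ip (fsub f g) h = ip f h - ip g h.
Proof.
move=> Lf Lg Lh; rewrite /ip -RintegralB //; last 2 first.
- exact: L2_mul.
- exact: L2_mul.
by congr Rintegral; apply: funext => x; rewrite /fsub mulrBl.
Qed.

Lemma ip0l h : ip (fun x => 0) h = 0.
Proof.
rewrite /ip (_ : (fun x => 0 * h x) = (fun x => 0)); last first.
  by apply: funext => x; rewrite mul0r.
by rewrite Rintegral_cst // mul0r.
Qed.

Lemma ipsuml n (F : nat -> R -> R) h : (forall i, L2 (F i)) -> L2 h ->
  ip (fsum n F) h = \sum_(i < n) ip (F i) h.
Proof.
move=> LF Lh; elim: n => [|n IH]; first by rewrite fsum0 big_ord0 ip0l.
by rewrite fsumS ipDl // ?IH ?big_ord_recr //; apply: L2sum.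
Qed.

Lemma ip_ge0 f : 0 <= ip f f.
Proof. by apply: Rintegral_ge0 => x _; rewrite -expr2 sqr_ge0. Qed.

Lemma nrm_ge0 f : 0 <= nrm f.
Proof. exact: sqrtr_ge0. Qed.

Lemma nrm_sq f : nrm f ^+ 2 = ip f f.
Proof. by rewrite /nrm sqr_sqrtr // ip_ge0. Qed.


Lemma quad_disc (A B C : R) : 0 <= C ->
  (forall t, 0 <= A - 2 * t * B + t ^+ 2 * C) -> B ^+ 2 <= A * C.
Proof.
move=> C0 H; have [Cz|Cp] := eqVneq C 0.
  have [Bz|Bn] := eqVneq B 0; first by rewrite Bz Cz expr0n mulr0.
  have := H ((A + 1) / (2 * B)); rewrite Cz mulr0 addr0.
  rewrite (_ : 2 * ((A + 1) / (2 * B)) * B = A + 1); last first.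
    by field.
  lra.
have Cgt : 0 < C by rewrite lt_def Cp C0.
have := H (B / C).
rewrite (_ : A - 2 * (B / C) * B + (B / C) ^+ 2 * C = A - B ^+ 2 / C); last first.
  by field.
rewrite subr_ge0 ler_pdivrMr //.
Qed.

Lemma ipBr f g h : L2 f -> L2 g -> L2 h -> ip h (fsub f g) = ip h f - ip h g.
Proof. by move=> *; rewrite ipC ipBl // ipC (ipC g). Qed.

Lemma ipZr a f h : L2 f -> L2 h -> ip h (fscale a f) = a * ip h f.
Proof. by move=> *; rewrite ipC ipZl // ipC. Qed.

Lemma CS2 f g : L2 f -> L2 g -> ip f g ^+ 2 <= ip f f * ip g g.
Proof.
move=> Lf Lg; apply: quad_disc; first exact: ip_ge0.
move=> t; have := ip_ge0 (fsub f (fscale t g)).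
have Ltg := L2Z t Lg.
rewrite ipBl //; last exact: L2B.
rewrite !ipBr // !ipZl // !ipZr // (ipC g f).
suff -> : ip f f - t * ip f g - (t * ip f g - t * (t * ip g g)) =
  ip f f - 2 * t * ip f g + t ^+ 2 * ip g g by [].
ring.
Qed.

Lemma CS f g : L2 f -> L2 g -> `|ip f g| <= nrm f * nrm g.
Proof.
move=> Lf Lg; rewrite /nrm -sqrtrM ?ip_ge0 // -sqrtr_sqr.
by apply: ler_wsqrtr; apply: CS2.
Qed.


Lemma lim_le0 (x : R) (g : nat -> R) : g n @[n --> \oo] --> 0 ->
  (exists N, forall n, (N <= n)%N -> x <= g n) -> x <= 0.
Proof.
move=> gc [N HN]; apply: (ler_cvg_to (cvg_cst x) gc).
by exists N => // n /= /HN.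
Qed.

Lemma cvg_comb (g : nat -> R) (A B : R) : g n @[n --> \oo] --> 0 ->
  (A * g n ^+ 2 + B * g n) @[n --> \oo] --> 0.
Proof.
move=> gc; have -> : 0 = A * (0 ^+ 2) + B * 0 :> R by rewrite expr0n mulr0 mulr0 addr0.
apply: cvgD; apply: cvgMr; last exact: gc.
rewrite expr2; exact: cvgM.
Qed.

Variable v : nat -> R -> R.
Hypothesis Hv : ONB v.

Lemma Lv k : L2 (v k). Proof. by case: Hv. Qed.
Lemma vorth i j : ip (v i) (v j) = (if i == j then 1 else 0).
Proof. by case: Hv => _ []. Qed.
Lemma nrm_v k : nrm (v k) = 1.
Proof. by rewrite /nrm vorth eqxx sqrtr1. Qed.

Definition Sb n (b : nat -> R) := fsum n (fun k => fscale (b k) (v k)).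
Definition cf f k := ip (v k) f.

Lemma L2Sb n b : L2 (Sb n b).
Proof. by apply: L2sum => i; apply: L2Z; apply: Lv. Qed.

Lemma ip_v_Sb j n b : ip (v j) (Sb n b) = if (j < n)%N then b j else 0.
Proof.
elim: n => [|n IH]; first by rewrite /Sb fsum0 ipC ip0l.
rewrite /Sb fsumS ipC ipDl; last by apply: Lv.
  2: by apply: L2sum => i; apply: L2Z; apply: Lv.
  2: by apply: L2Z; apply: Lv.
rewrite ipC -/(Sb n b) IH ipZl ?Lv // ?Lv //.
rewrite vorth ltnS.
have [h|h|->] := ltngtP j n.
- by rewrite mulr0 addr0.
- by rewrite mulr0 addr0.
- by rewrite mulr1 add0r.
all: exact: Lv.
Qed.

Lemma ip_Sb_l n b g : L2 g -> ip (Sb n b) g = \sum_(i < n) b i * ip (v i) g.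
Proof.
move=> Lg; rewrite /Sb ipsuml //; last by move=> i; apply: L2Z; apply: Lv.
by apply: eq_bigr => i _; rewrite ipZl //; apply: Lv.
Qed.

Definition Sf n f := Sb n (cf f).
Lemma L2Sf n f : L2 (Sf n f). Proof. exact: L2Sb. Qed.
#[local] Hint Resolve Lv L2Sb L2Sf : core.

Lemma ip_res_l n f g : L2 f -> L2 g ->
  ip (fsub f (Sf n f)) g = ip f g - \sum_(i < n) cf f i * cf g i.
Proof.
move=> Lf Lg; rewrite ipBl // /Sf ip_Sb_l //.
Qed.

Lemma ip_res_res n f : L2 f ->
  ip (fsub f (Sf n f)) (fsub f (Sf n f)) = ip f f - \sum_(i < n) cf f i ^+ 2.
Proof.
move=> Lf; rewrite ip_res_l //; last exact: L2B.
rewrite ipC ip_res_l //.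
have -> : \sum_(i < n) cf f i * cf (fsub f (Sf n f)) i = 0.
  rewrite big1 // => i _; rewrite /cf ipBr // /Sf ip_v_Sb ltn_ord /cf subrr mulr0 //.
rewrite subr0; congr (_ - _); apply: eq_bigr => i _; by rewrite expr2.
Qed.

Definition hres n f := nrm (fsub f (Sf n f)).

Lemma hres_cvg f : L2 f -> hres n f @[n --> \oo] --> 0.
Proof. by case: Hv => _ [_ H] /H. Qed.

Lemma hres_sq n f : L2 f -> hres n f ^+ 2 = ip f f - \sum_(i < n) cf f i ^+ 2.
Proof. by move=> Lf; rewrite /hres nrm_sq ip_res_res. Qed.

Lemma bessel n f : L2 f -> \sum_(i < n) cf f i ^+ 2 <= ip f f.
Proof. by move=> Lf; rewrite -subr_ge0 -hres_sq // sqr_ge0. Qed.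

Lemma pars_err n f g : L2 f -> L2 g ->
  `|ip f g - \sum_(i < n) cf f i * cf g i| <= hres n f * nrm g.
Proof.
by move=> Lf Lg; rewrite -ip_res_l //; apply: CS => //; apply: L2B; rewrite ?L2Sb.
Qed.

Lemma cf_bound k f : L2 f -> `|cf f k| <= nrm f.
Proof. by move=> Lf; rewrite -[nrm f]mul1r -(nrm_v k); apply: CS; rewrite ?Lv. Qed.


Lemma ip_comb a b f g : L2 f -> L2 g ->
  ip (fsub (fscale a f) (fscale b g)) (fsub (fscale a f) (fscale b g)) =
  a ^+ 2 * ip f f - 2 * a * b * ip f g + b ^+ 2 * ip g g.
Proof.
move=> Lf Lg; have Laf := L2Z a Lf; have Lbg := L2Z b Lg.
rewrite ipBl //; last exact: L2B.
rewrite !ipBr // !ipZl // !ipZr // (ipC g f); ring.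
Qed.

Lemma sq_le (x y : R) : `|x| <= y -> x ^+ 2 <= y ^+ 2.
Proof. rewrite ler_norml => /andP[h1 h2]; nra. Qed.

Variable T : (R -> R) -> (R -> R).
Variable lam : nat -> R.
Hypothesis Hs : spectral_decomp T lam v.

Lemma LT f : L2 f -> L2 (T f).
Proof. by move=> Lf; case: (Hs Lf). Qed.

Lemma cfT f j : L2 f -> cf (T f) j = lam j * cf f j.
Proof.
move=> Lf; have [LTf Hc] := Hs Lf.
pose b := fun k => lam k * cf f k.
apply/eqP; rewrite -subr_eq0 -normr_le0.
apply: (lim_le0 Hc); exists j.+1 => n hn.
have -> : cf (T f) j - lam j * cf f j = ip (v j) (fsub (T f) (Sb n b)).
  by rewrite ipBr // ip_v_Sb hn.
exact: cf_bound (L2B LTf (L2Sb n b)).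
Qed.

Lemma piS u0 k : power_iter T u0 k.+1 =
  fscale (nrm (T (power_iter T u0 k)))^-1 (T (power_iter T u0 k)).
Proof. by apply: funext => x; rewrite /= /fscale mulrC. Qed.

Variable u0 : R -> R.
Hypothesis Lu0 : L2 u0.
Hypothesis lam0 : 0 < lam 0%N.
Hypothesis a0n : cf u0 0%N != 0.

Notation u k := (power_iter T u0 k).

Fixpoint Q k := match k with 0%N => 1 | k'.+1 => Q k' * nrm (T (u k')) end.

Lemma Lu k : L2 (u k).
Proof. elim: k => [|k IH] //; rewrite piS; apply: L2Z; exact: LT. Qed.

Lemma iter_coef k : 0 < Q k /\ forall j, cf (u k) j * Q k = lam j ^+ k * cf u0 j.
Proof.
elim: k => [|k [Qp IH]]; first by split => // j; rewrite /= mulr1 expr0 mul1r.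
have cfS j : cf (u k.+1) j = (nrm (T (u k)))^-1 * (lam j * cf (u k) j).
  rewrite piS /cf ipZr //; last by apply: LT; apply: Lu.
  by rewrite -/(cf _ _) cfT //; apply: Lu.
have Np : 0 < nrm (T (u k)).
  have c0n : cf (u k) 0%N != 0.
    apply/eqP => h; move: (IH 0%N); rewrite h mul0r => /esym/eqP.
    by rewrite mulf_eq0 expf_eq0 (negbTE a0n) orbF (gt_eqF lam0) andbF.
  apply: (lt_le_trans _ (cf_bound 0%N (LT (Lu k)))).
  rewrite cfT; last exact: Lu.
  have : lam 0%N * cf (u k) 0%N != 0 by rewrite mulf_neq0 // gt_eqF.
  by rewrite -normr_gt0.
split; first by rewrite /= mulr_gt0.
move=> j; rewrite cfS /= exprS -mulrA -IH; field; by rewrite (gt_eqF Np).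
Qed.

Lemma ip_uu k : (0 < k)%N -> ip (u k) (u k) = 1.
Proof.
case: k => // k _; have LTu := LT (Lu k).
rewrite piS ipZl //; last exact: L2Z.
rewrite ipZr //.
have Np : 0 < nrm (T (u k)) by case: (iter_coef k.+1) => /= + _; rewrite pmulr_rgt0 //; case: (iter_coef k).
rewrite -nrm_sq; field; by rewrite (gt_eqF Np).
Qed.


Variables (gamma eta : R) (k : nat).
Hypotheses (Hlam : forall j, `|lam j| <= lam 0%N) (g0 : 0 < gamma) (g1 : gamma <= 1)
  (Hgap : forall j, (0 < j)%N -> lam 0%N - `|lam j| >= gamma * lam 0%N)
  (eta0 : 0 < eta) (Heta : eta <= `|cf u0 0%N|) (k1 : (0 < k)%N).

Lemma lamk_small j : (0 < j)%N ->
  (lam j ^+ k) ^+ 2 <= ((1 - gamma) ^+ k * lam 0%N ^+ k) ^+ 2.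
Proof.
move=> j0; apply: sq_le; rewrite normrX -exprMn; apply: lerXn2r.
- by rewrite nnegrE.
- by rewrite nnegrE mulr_ge0 // ?subr_ge0 // ltW.
- have := Hgap j0; lra.
Qed.

Lemma psum n : \sum_(j < n) (lam j ^+ k * cf u0 j) ^+ 2 <=
  (lam 0%N ^+ k * cf u0 0%N) ^+ 2 + ((1 - gamma) ^+ k * lam 0%N ^+ k) ^+ 2 * ip u0 u0.
Proof.
case: n => [|n].
  by rewrite big_ord0 addr_ge0 ?sqr_ge0 // mulr_ge0 ?sqr_ge0 // ip_ge0.
rewrite big_ord_recl lerD2l.
apply: (@le_trans _ _ (\sum_(i < n) ((1 - gamma) ^+ k * lam 0%N ^+ k) ^+ 2 *
   cf u0 (bump 0 i) ^+ 2)).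
  apply: ler_sum => i _; rewrite exprMn; apply: ler_wpM2r; first exact: sqr_ge0.
  exact: lamk_small.
rewrite -mulr_sumr; apply: ler_wpM2l; first exact: sqr_ge0.
apply: le_trans (bessel n.+1 Lu0); rewrite big_ord_recl.
by apply: ler_wpDl; first exact: sqr_ge0.
Qed.

Lemma Qbound : Q k ^+ 2 <= (lam 0%N ^+ k * cf u0 0%N) ^+ 2 +
  ((1 - gamma) ^+ k * lam 0%N ^+ k) ^+ 2 * ip u0 u0.
Proof.
rewrite -subr_le0.
apply: (lim_le0 (cvg_comb (Q k ^+ 2) 0 (hres_cvg (Lu k)))); exists 0%N => n _.
have hs := hres_sq n (Lu k); rewrite ip_uu // in hs.
have ps := psum n.
have e : \sum_(j < n) (lam j ^+ k * cf u0 j) ^+ 2 =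
    Q k ^+ 2 * \sum_(j < n) cf (u k) j ^+ 2.
  rewrite mulr_sumr; apply: eq_bigr => j _.
  by rewrite -(proj2 (iter_coef k) j) exprMn mulrC.
rewrite hs mul0r addr0 mulrBr mulr1 -e; lra.
Qed.


Definition sgn := Num.sg (cf u0 0%N).
Definition tt := sgn * cf (u k) 0%N.
Definition Rr := (1 - gamma) ^+ (2 * k) * nrm u0 ^+ 2 / eta ^+ 2.

Lemma sgn2 : sgn ^+ 2 = 1.
Proof. by rewrite /sgn sqr_sg a0n. Qed.

Lemma tQ : tt * Q k = lam 0%N ^+ k * `|cf u0 0%N|.
Proof. by rewrite /tt -mulrA (proj2 (iter_coef k)) mulrCA -normrEsg. Qed.

Lemma Qpos : 0 < Q k. Proof. by case: (iter_coef k). Qed.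

Lemma t_gt0 : 0 < tt.
Proof.
have : 0 < tt * Q k.
  by rewrite tQ mulr_gt0 ?exprn_gt0 // normr_gt0.
by rewrite pmulr_lgt0 // Qpos.
Qed.

Lemma t_sq : tt ^+ 2 = cf (u k) 0%N ^+ 2.
Proof. by rewrite /tt exprMn sgn2 mul1r. Qed.

Lemma nrm_u : nrm (u k) = 1.
Proof. by rewrite /nrm ip_uu // sqrtr1. Qed.

Lemma t_le1 : tt ^+ 2 <= 1.
Proof.
rewrite t_sq -(expr1n _ 2); apply: sq_le; rewrite -nrm_u; apply: cf_bound; exact: Lu.
Qed.

Lemma t_le1' : tt <= 1.
Proof. have := t_le1; have := t_gt0; nra. Qed.

Lemma Rr_ge0 : 0 <= Rr.
Proof.
rewrite /Rr; apply: divr_ge0; last exact: sqr_ge0.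
apply: mulr_ge0; last exact: sqr_ge0.
by apply: exprn_ge0; rewrite subr_ge0.
Qed.

Lemma one_t2 : 1 - tt ^+ 2 <= Rr.
Proof.
have Qb := Qbound.
have hB : (lam 0%N ^+ k * cf u0 0%N) ^+ 2 = tt ^+ 2 * Q k ^+ 2.
  by rewrite -exprMn tQ !exprMn real_normK // num_real.
set L := lam 0%N ^+ k; set a := cf u0 0%N; set r := (1 - gamma) ^+ k.
have Lp : 0 < L by apply: exprn_gt0.
have t1 := t_le1.
have h1 : Q k ^+ 2 * (1 - tt ^+ 2) <= (r * L) ^+ 2 * ip u0 u0.
  move: Qb; rewrite -/L -/a -/r hB; nra.
have h2 : L ^+ 2 * a ^+ 2 * (1 - tt ^+ 2) <= Q k ^+ 2 * (1 - tt ^+ 2).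
  rewrite -exprMn hB; apply: ler_wpM2r; first lra.
  have := sqr_ge0 (Q k); nra.
have h3 : a ^+ 2 * (1 - tt ^+ 2) <= r ^+ 2 * ip u0 u0.
  rewrite -(ler_pM2l (exprn_gt0 2 Lp)).
  have -> : L ^+ 2 * (a ^+ 2 * (1 - tt ^+ 2)) = L ^+ 2 * a ^+ 2 * (1 - tt ^+ 2) by ring.
  have -> : L ^+ 2 * (r ^+ 2 * ip u0 u0) = (r * L) ^+ 2 * ip u0 u0 by ring.
  exact: le_trans h2 h1.
have h5 : eta ^+ 2 <= a ^+ 2.
  rewrite -(real_normK (num_real a)); apply: lerXn2r => //; rewrite nnegrE ?ltW //.
have h6 : eta ^+ 2 * (1 - tt ^+ 2) <= r ^+ 2 * ip u0 u0.
  apply: le_trans h3; apply: ler_wpM2r => //; lra.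
rewrite /Rr nrm_sq mulnC exprM -/r ler_pdivlMr ?exprn_gt0 //; lra.
Qed.

Lemma claim1 : nrm (fsub (u k) (fscale sgn (v 0%N))) ^+ 2 <=
  2 * (1 - gamma) ^+ (2 * k) * nrm u0 ^+ 2 / eta ^+ 2.
Proof.
have -> : 2 * (1 - gamma) ^+ (2 * k) * nrm u0 ^+ 2 / eta ^+ 2 = 2 * Rr.
  by rewrite /Rr !mulrA.
have -> : fsub (u k) (fscale sgn (v 0%N)) = fsub (fscale 1 (u k)) (fscale sgn (v 0%N)).
  by apply: funext => x; rewrite /fsub /fscale mul1r.
rewrite nrm_sq ip_comb; [|exact: Lu|exact: Lv].
rewrite ip_uu // vorth eqxx sgn2 ipC -/(cf _ _).
have := one_t2; have := t_le1'; have := t_gt0; rewrite /tt; nra.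
Qed.


Definition mu := ip (u k) (T (u k)).

Lemma lam_le j : lam j <= lam 0%N.
Proof. exact: le_trans (ler_norm _) (Hlam j). Qed.

Lemma mu_facts n :
  let p := \sum_(j < n) cf (u k) j ^+ 2 in
  let q := \sum_(j < n) cf (u k) j * (lam j * cf (u k) j) in
  [/\ `|mu - q| <= hres n (u k) * nrm (T (u k)),
      hres n (u k) ^+ 2 = 1 - p, p <= 1 & q <= lam 0%N * p].
Proof.
move=> p q; have Lu' := Lu k; have LTu := LT Lu'.
split.
- have := pars_err n Lu' LTu; rewrite /mu /q.
  by under eq_bigr do rewrite cfT //.
- by rewrite hres_sq // ip_uu.
- by have := bessel n Lu'; rewrite ip_uu.
- rewrite /q /p mulr_sumr; apply: ler_sum => j _.
  rewrite mulrCA -expr2; apply: ler_wpM2r; [exact: sqr_ge0 | exact: lam_le].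
Qed.

Lemma mu_le : mu <= lam 0%N.
Proof.
rewrite -subr_le0.
apply: (lim_le0 (cvg_comb 0 (nrm (T (u k))) (hres_cvg (Lu k)))); exists 0%N => n _.
have [h1 h2 h3 h4] := mu_facts n.
move: h1; rewrite ler_norml => /andP[_ h1].
have h5 : lam 0%N * (\sum_(j < n) cf (u k) j ^+ 2) <= lam 0%N.
  by rewrite -[X in _ <= X]mulr1; apply: ler_wpM2l => //; exact: ltW.
rewrite mul0r add0r mulrC; lra.
Qed.

Lemma mu_ge : lam 0%N - mu <= 2 * lam 0%N * (1 - tt ^+ 2).
Proof.
rewrite -subr_le0.
apply: (lim_le0 (cvg_comb (lam 0%N) (nrm (T (u k))) (hres_cvg (Lu k)))); exists 1%N.
case=> // m _.
have [h1 h2 h3 h4] := mu_facts m.+1.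
move: h1; rewrite ler_norml => /andP[h1 _].
set p := \sum_(j < m.+1) cf (u k) j ^+ 2 in h2 h3 h4 *.
set q := \sum_(j < m.+1) cf (u k) j * (lam j * cf (u k) j) in h1 h4 *.
have h5 : lam 0%N * p <= lam 0%N.
  by rewrite -[X in _ <= X]mulr1; apply: ler_wpM2l => //; exact: ltW.
have h6 : lam 0%N * p - q <= 2 * lam 0%N * (p - cf (u k) 0%N ^+ 2).
  rewrite /p /q mulr_sumr -sumrB !big_ord_recl /= (addrC (cf (u k) 0%N ^+ 2)) addrK.
  have -> : lam 0%N * cf (u k) 0%N ^+ 2 - cf (u k) 0%N * (lam 0%N * cf (u k) 0%N) = 0.
    by ring.
  rewrite add0r mulr_sumr; apply: ler_sum => i _.
  have : - lam (bump 0 i) <= lam 0%N.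
    by apply: le_trans _ (Hlam (bump 0 i)); rewrite -normrN ler_norm.
  have := sqr_ge0 (cf (u k) (bump 0 i)); nra.
rewrite t_sq h2 (mulrC (nrm _)); nra.
Qed.


Lemma claim2 :
  nrm (fsub (fscale (Num.sqrt mu) (u k))
            (fscale (Num.sqrt (lam 0%N) * sgn) (v 0%N))) ^+ 2
   <= 18 * lam 0%N * (1 - gamma) ^+ (2 * k) * nrm u0 ^+ 2 / eta ^+ 2.
Proof.
have -> : 18 * lam 0%N * (1 - gamma) ^+ (2 * k) * nrm u0 ^+ 2 / eta ^+ 2 =
   18 * lam 0%N * Rr by rewrite /Rr !mulrA.
rewrite nrm_sq ip_comb; [|exact: Lu|exact: Lv].
rewrite ip_uu // vorth eqxx ipC -/(cf _ _).
set a := Num.sqrt mu; set b := Num.sqrt (lam 0%N).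
have b2 : b ^+ 2 = lam 0%N by rewrite sqr_sqrtr // ltW.
have b0 : 0 <= b by apply: sqrtr_ge0.
have a0' : 0 <= a by apply: sqrtr_ge0.
have aleb : a <= b by apply: ler_wsqrtr; exact: mu_le.
have Rr0 := Rr_ge0; have ot := one_t2; have t1 := t_le1'; have tp := t_gt0.
have mg := mu_ge; have ml := mu_le.
have a2ge : lam 0%N - a ^+ 2 <= 2 * lam 0%N * Rr.
  have [mu0|mu0] := lerP 0 mu.
    rewrite sqr_sqrtr //; nra.
  rewrite /a ler0_sqrtr ?ltW // expr0n subr0; nra.
have hA : (b - a) ^+ 2 <= b ^+ 2 - a ^+ 2 by nra.
have hab : a * b <= b ^+ 2 by rewrite expr2; apply: ler_wpM2r.
have hB : a * b * (1 - tt) <= b ^+ 2 * Rr.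
  apply: le_trans (_ : b ^+ 2 * (1 - tt) <= _).
    by apply: ler_wpM2r => //; lra.
  by apply: ler_wpM2l; [exact: sqr_ge0 | nra].
have e : a ^+ 2 * 1 - 2 * a * (b * sgn) * cf (u k) 0%N + (b * sgn) ^+ 2 * 1 =
   (b - a) ^+ 2 + 2 * (a * b * (1 - tt)).
  rewrite /tt exprMn sgn2; ring.
rewrite e; nra.
Qed.

End S.
Theorem mainTheorem8 (R : realType) (T : (R -> R) -> (R -> R))
  (lam : nat -> R) (v : nat -> R -> R) (gamma eta : R) (u0 : R -> R) :
  ONB v ->
  spectral_decomp T lam v ->
  HS_eigs lam ->
  0 < lam 0%N ->
  (forall k, `|lam k| <= lam 0%N) ->
  0 < gamma -> gamma <= 1 ->
  (forall k, (0 < k)%N -> lam 0%N - `|lam k| >= gamma * lam 0%N) ->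
  L2 u0 ->
  0 < eta -> `|ip (v 0%N) u0| >= eta ->
  let s := Num.sg (ip (v 0%N) u0) in
  forall k : nat, (1 <= k)%N ->
    nrm (fsub (power_iter T u0 k) (fscale s (v 0%N))) ^+ 2
      <= 2 * (1 - gamma) ^+ (2 * k) * nrm u0 ^+ 2 / eta ^+ 2
    /\
    (k%:R >= ln (eta / (4 * nrm u0)) / ln (1 - gamma) ->
     nrm (fsub (fscale (Num.sqrt (ip (power_iter T u0 k) (T (power_iter T u0 k))))
                       (power_iter T u0 k))
               (fscale (Num.sqrt (lam 0%N) * s) (v 0%N))) ^+ 2
       <= 18 * lam 0%N * (1 - gamma) ^+ (2 * k) * nrm u0 ^+ 2 / eta ^+ 2).
Proof.
move=> Hv Hs _ lam0 Hlam g0 g1 Hgap Lu0 eta0 Heta s k k1.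
have a0n : cf v u0 0%N != 0.
  by rewrite -normr_gt0; exact: lt_le_trans eta0 Heta.
split.
  exact: (claim1 Hv Hs Lu0 lam0 a0n g1 Hgap eta0 Heta k1).
move=> _; exact: (claim2 Hv Hs Lu0 lam0 a0n Hlam g1 Hgap eta0 Heta k1).
Qed.
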